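(* Let $m\ge 1$, $r\ge 1$, and for a multi-index $\alpha=(\alpha_1,\dots,\alpha_r)\in\mathbb Z_{\ge 0}^r$ put $|\alpha|=\sum_{l=1}^r\alpha_l$ and $w(\alpha)=\sum_{l=1}^r l\,\alpha_l$. For $0\le k\le j$ define the polynomials $$\mathcal M^{(r)}_{k,j}(t_1,\dots,t_r)=\sum_{|\alpha|=k,\ w(\alpha)=j}\frac{k!}{\alpha_1!\cdots\alpha_r!}\prod_{l=1}^r t_l^{\alpha_l},$$ i.e. $\mathcal M^{(r)}_{k,j}$ is the coefficient of $\varepsilon^j$ in $\big(\sum_{l=1}^r t_l\varepsilon^l\big)^k$, and set $\mathcal M^{(r)}_{k,j}=0$ for $k>j$. Consider an $\varepsilon$-dependent family of $\mathfrak{gl}_m(\mathbb C)$-valued connection matrices of the form $$A(\lambda)=\sum_{k=0}^{r-1}\frac{B_k}{(\lambda-u)^{k+1}}+\frac{C}{\lambda-v}+(\text{terms holomorphic at }\lambda=u\text{ and }\lambda=v),\qquad B_k=\sum_{j=k}^{r-1}A_j\,\mathcal M^{(r-1)}_{k,j}(t_1,\dots,t_{r-1}),$$ where $$v=u+\sum_{i=1}^r t_i\varepsilon^i,$$ and assume that, as $\varepsilon\to0$, there are $\varepsilon$-independent matrices $W^{[j]}$ ($j\ge -r$) and $A^{[k,l]}$ ($0\le k\le r-1$, $l\ge 0$) with asymptotic expansions $$C\sim\sum_{j=-r}^{\infty}W^{[j]}\varepsilon^j,\qquad A_k\sim-\sum_{l=1}^{r-k}\frac{W^{[-k-l]}}{\varepsilon^l}+A^{[k,0]}+\sum_{l=1}^\infty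 A^{[k,l]}\varepsilon^l\quad(0\le k\le r-1),$$ the holomorphic terms having a finite limit. Then the limit $\varepsilon\to0$ of the connection exists and equals $$\tilde A(\lambda)=\sum_{i=0}^{r}\frac{\tilde B_i(t_1,\dots,t_r)}{(\lambda-u)^{i+1}}+(\text{holomorphic terms}),\qquad \tilde B_i=\sum_{k=i}^{r}\tilde A_k\,\mathcal M^{(r)}_{i,k}(t_1,\dots,t_r),$$ where $\tilde A_k=W^{[-k]}+A^{[k,0]}$ for $k<r$ and $\tilde A_r=W^{[-r]}$.
   Context: The matrices $A_j,C,W^{[j]},A^{[k,l]}$ are $m\times m$ complex matrices (possibly depending on further variables), $u$ and $t_1,\dots,t_r$ are complex parameters and $\varepsilon$ is a small complex parameter; $\lambda$ is the spectral variable on $\mathbb{CP}^1$. *)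

(* Defs.v *)
From Stdlib Require Import Reals ZArith List Arith.
From Coquelicot Require Export Coquelicot.
Export ListNotations.

Open Scope C_scope.

(** m x m complex matrices, represented entrywise; only the entries
    [M i j] with [i, j < m] are meaningful. All operations occurring in the
    statement (sums, multiplication by scalars, limits, asymptotic expansions)
    are entrywise. *)
Definition Mat := nat -> nat -> C.

Definition csum (f : nat -> C) (a b : nat) : C :=
  if (b <? a)%nat then 0 else sum_n_m f a b.

Definition Cpowz (e : C) (z : Z) : C :=
  match z with
  | Z0 => 1
  | Zpos p => Cpow e (Pos.to_nat p)
  | Zneg p => / Cpow e (Pos.to_nat p)
  end.

Fixpoint idx_lists (n b : nat) : list (list nat) :=
  match n with
  | O => [ [] ]
  | S n' => flat_map (fun a => map (cons a) (idx_lists n' b)) (seq 0 (S b))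
  end.

Fixpoint abs_idx (al : list nat) : nat :=
  match al with [] => O | a :: l => (a + abs_idx l)%nat end.

Fixpoint wgt_from (s : nat) (al : list nat) : nat :=
  match al with [] => O | a :: l => (s * a + wgt_from (S s) l)%nat end.

Definition wgt (al : list nat) : nat := wgt_from 1 al.

Fixpoint fact_prod (al : list nat) : nat :=
  match al with [] => 1%nat | a :: l => (fact a * fact_prod l)%nat end.

Fixpoint mon_from (t : nat -> C) (s : nat) (al : list nat) : C :=
  match al with [] => 1 | a :: l => Cpow (t s) a * mon_from t (S s) l end.

(** The parameters are t 1, ..., t r.
    (Every multi-index with |alpha| = k has all entries <= k, so summing over
    [idx_lists r k] covers all of them.) *)
Definition Mpoly (r : nat) (t : nat -> C) (k j : nat) : C :=
  if (k <=? j)%nat then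
    fold_right Cplus 0
      (map (fun al => RtoC (INR (fact k) / INR (fact_prod al)) * mon_from t 1 al)
         (filter (fun al => andb (abs_idx al =? k)%nat (wgt al =? j)%nat)
            (idx_lists r k)))
  else 0.

(** [asymp f lo c] : f(eps) ~ sum_{n >= -lo} c(n) eps^n as eps -> 0 (eps complex,
    eps <> 0), in the sense of Poincare: for every N >= 0,
       f(eps) - sum_{n=-lo}^{N} c(n) eps^n = o(eps^N). *)
Definition asymp (f : C -> C) (lo : nat) (c : Z -> C) : Prop :=
  forall N : nat,
    filterlim
      (fun e => (f e - csum (fun p => c (Z.of_nat p - Z.of_nat lo)%Z
                                      * Cpowz e (Z.of_nat p - Z.of_nat lo)%Z)
                           0 (lo + N)) / Cpow e N)
      (locally' (0 : C)) (locally (0 : C)).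

Definition holo_at (g : C -> C) (z0 : C) : Prop :=
  exists d : posreal, forall z : C, Cmod (z - z0) < d ->
    ex_derive (K := C_AbsRing) (V := C_NormedModule) g z.

Definition vpt (r : nat) (u : C) (t : nat -> C) (e : C) : C :=
  u + csum (fun i => t i * Cpow e i) 1 r.

Definition Bk (r : nat) (t : nat -> C) (A : nat -> C -> Mat) (k : nat) (e : C) : Mat :=
  fun a b => csum (fun j => A j e a b * Mpoly (r - 1) t k j) k (r - 1).

Definition conn (r : nat) (u : C) (t : nat -> C) (A : nat -> C -> Mat)
    (Cm : C -> Mat) (H : C -> C -> Mat) (e lam : C) : Mat :=
  fun a b =>
    csum (fun k => Bk r t A k e a b / Cpow (lam - u) (S k)) 0 (r - 1)
    + Cm e a b / (lam - vpt r u t e) + H e lam a b.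

(** coefficients of the expansion of A_k:
    -W^{[-k-l]} at eps^{-l} (1 <= l <= r-k), A^{[k,n]} at eps^n (n >= 0) *)
Definition Acoefs (W : Z -> Mat) (Ac : nat -> nat -> Mat) (k : nat) (a b : nat)
    (n : Z) : C :=
  if (n <? 0)%Z then - W (n - Z.of_nat k)%Z a b else Ac k (Z.to_nat n) a b.

Definition Atil (r : nat) (W : Z -> Mat) (Ac : nat -> nat -> Mat) (k : nat) : Mat :=
  fun a b => if (k <? r)%nat then W (- Z.of_nat k)%Z a b + Ac k 0%nat a b
             else W (- Z.of_nat r)%Z a b.

Definition Btil (r : nat) (t : nat -> C) (W : Z -> Mat) (Ac : nat -> nat -> Mat)
    (i : nat) : Mat :=
  fun a b => csum (fun k => Atil r W Ac k a b * Mpoly r t i k) i r.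

(* Main.v *)
Require Import Defs.
From Stdlib Require Import Reals ZArith List Arith.
From Coquelicot Require Import Coquelicot.
Open Scope C_scope.
From Stdlib Require Import Lia Lra.

Fixpoint fs (f : nat -> C) (n : nat) : C :=
  match n with O => 0 | S n => fs f n + f n end.

Lemma fs_ext (f g : nat -> C) n : (forall i, (i < n)%nat -> f i = g i) -> fs f n = fs g n.
Proof. induction n; simpl; intros H; auto. rewrite IHn by (intros; apply H; lia). rewrite H by lia; auto. Qed.
Lemma fs_plus (f g : nat -> C) n : fs (fun i => f i + g i) n = fs f n + fs g n.
Proof. induction n; simpl. ring. rewrite IHn; ring. Qed.
Lemma fs_scal_l (c : C) (f : nat -> C) n : fs (fun i => c * f i) n = c * fs f n.
Proof. induction n; simpl. ring. rewrite IHn; ring. Qed.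
Lemma fs_scal_r (c : C) (f : nat -> C) n : fs (fun i => f i * c) n = fs f n * c.
Proof. induction n; simpl. ring. rewrite IHn; ring. Qed.
Lemma fs_opp (f : nat -> C) n : fs (fun i => - f i) n = - fs f n.
Proof. induction n; simpl. ring. rewrite IHn; ring. Qed.
Lemma fs_zero (f : nat -> C) n : (forall i, (i < n)%nat -> f i = 0) -> fs f n = 0.
Proof. induction n; simpl; intros H; auto. rewrite IHn, H. ring. lia. intros; apply H; lia. Qed.
Lemma fs_add (f : nat -> C) n m : fs f (n + m) = fs f n + fs (fun i => f (n + i)%nat) m.
Proof. induction m; simpl. rewrite Nat.add_0_r; ring. rewrite Nat.add_succ_r; simpl. rewrite IHm; ring. Qed.
Lemma fs_shift (f : nat -> C) n : fs f (S n) = f O + fs (fun i => f (S i)) n.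
Proof. induction n; simpl. ring. simpl in IHn. rewrite IHn. ring. Qed.
Lemma fs_swap (f : nat -> nat -> C) n m : fs (fun i => fs (fun j => f i j) m) n = fs (fun j => fs (fun i => f i j) n) m.
Proof. induction n; simpl. symmetry; apply fs_zero; auto. rewrite IHn, fs_plus. auto. Qed.
Lemma fs_delta (c : C) k n : (k < n)%nat -> fs (fun i => if (i =? k)%nat then c else 0) n = c.
Proof. induction n; intros H. lia. simpl. destruct (Nat.eq_dec k n).
 subst. rewrite Nat.eqb_refl. match goal with |- fs ?g _ + _ = _ => rewrite (fs_zero g) end. ring. intros i Hi. destruct (Nat.eqb_spec i n); auto; lia.
 destruct (Nat.eqb_spec n k). lia. rewrite IHn by lia. ring. Qed.

Lemma csum_fs (f : nat -> C) a b : csum f a b = fs (fun i => f (a + i)%nat) (S b - a).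
Proof. unfold csum. destruct (Nat.ltb_spec b a). replace (S b - a)%nat with O by lia. auto.
 replace b with (a + (b - a))%nat at 1 by lia. replace (S b - a)%nat with (S (b - a)) by lia.
 generalize (b - a)%nat. clear. induction n.
 rewrite Nat.add_0_r, sum_n_n. simpl. rewrite Nat.add_0_r. ring.
 rewrite Nat.add_succ_r, sum_n_Sm by lia. rewrite IHn. simpl. replace (a + S n)%nat with (S (a + n)) by lia. auto. Qed.

Definition L0 (f : C -> C) (l : C) := filterlim f (locally' (0:C)) (locally l).

Lemma L0_const (c : C) : L0 (fun _ => c) c.
Proof. apply filterlim_const. Qed.
Lemma L0_id : L0 (fun e => e) 0.
Proof. intros P HP. unfold filtermap, locally', within. eapply filter_imp; [|exact HP]. auto. Qed.
Lemma L0_plus (f g : C -> C) (lf lg : C) : L0 f lf -> L0 g lg -> L0 (fun e => f e + g e) (lf + lg).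
Proof. intros Hf Hg. apply (filterlim_comp_2 f g Cplus Hf Hg). apply (@filterlim_plus C_AbsRing C_NormedModule lf lg). Qed.
Lemma L0_mult (f g : C -> C) (lf lg : C) : L0 f lf -> L0 g lg -> L0 (fun e => f e * g e) (lf * lg).
Proof. intros Hf Hg.
 assert (Hf' : filterlim f (locally' (0:C)) (@locally (AbsRing_UniformSpace C_AbsRing) lf)).
 { intros P HP. apply Hf. apply locally_C. exact HP. }
 assert (Hg' : filterlim g (locally' (0:C)) (@locally (AbsRing_UniformSpace C_AbsRing) lg)).
 { intros P HP. apply Hg. apply locally_C. exact HP. }
 pose proof (filterlim_comp_2 f g (@mult C_AbsRing) Hf' Hg' (@filterlim_mult C_AbsRing lf lg)) as K.
 intros P HP. apply K. apply locally_C. exact HP. Qed.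
Lemma L0_ext (f g : C -> C) (l : C) : locally' (0:C) (fun e => f e = g e) -> L0 f l -> L0 g l.
Proof. intros H1 H2. exact (filterlim_ext_loc f g H1 H2). Qed.
Lemma L0_ext0 (f g : C -> C) (l : C) : (forall e : C, e <> 0 -> f e = g e) -> L0 f l -> L0 g l.
Proof. intros H1. apply L0_ext. unfold locally', within. apply filter_forall. intros x Hx; apply H1; exact Hx. Qed.
Lemma L0_opp (f : C -> C) (l : C) : L0 f l -> L0 (fun e => - f e) (- l).
Proof. intros H. replace (- l) with (-1 * l) by ring. eapply L0_ext0. 2: apply (L0_mult _ _ _ _ (L0_const (-1)) H).
 intros; simpl; ring. Qed.
Lemma L0_minus (f g : C -> C) (lf lg : C) : L0 f lf -> L0 g lg -> L0 (fun e => f e - g e) (lf - lg).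
Proof. intros. apply L0_plus; auto. apply L0_opp; auto. Qed.
Lemma L0_pow (f : C -> C) (l : C) n : L0 f l -> L0 (fun e => f e ^ n) (l ^ n).
Proof. intros H. induction n; simpl. apply L0_const. apply L0_mult; auto. Qed.
Lemma L0_fs (f : nat -> C -> C) (l : nat -> C) n : (forall i, (i < n)%nat -> L0 (f i) (l i)) -> L0 (fun e => fs (fun i => f i e) n) (fs l n).
Proof. induction n; intros H; simpl. apply L0_const. apply L0_plus; auto. Qed.
Lemma L0_poly (c : nat -> C) N : L0 (fun e => fs (fun p => c p * e ^ p) N) (fs (fun p => c p * 0 ^ p) N).
Proof. apply L0_fs. intros. apply L0_mult. apply L0_const. apply L0_pow, L0_id. Qed.

Lemma Cmod_pos_ne (z : C) : z <> 0 -> (0 < Cmod z)%R.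
Proof. intros. apply Cmod_gt_0. auto. Qed.

Lemma locally_ne0 (l : C) : l <> 0 -> locally l (fun z : C => z <> 0).
Proof. intros Hl. apply (@locally_le_locally_norm C_AbsRing C_NormedModule). exists (mkposreal _ (Cmod_pos_ne l Hl)).
 intros y Hy Hy0. assert (H : (Cmod (y - l) < Cmod l)%R) by exact Hy. rewrite Hy0 in H.
 replace (0 - l) with (-l) in H by ring.
 rewrite Cmod_opp in H. lra. Qed.

Lemma L0_ne0 (f : C -> C) (l : C) : L0 f l -> l <> 0 -> locally' (0:C) (fun e : C => f e <> 0).
Proof. intros H Hl. exact (H _ (locally_ne0 l Hl)). Qed.

Lemma Cinv_cont (l : C) : l <> 0 -> filterlim Cinv (locally l) (locally (/ l)).
Proof.
 intros Hl. apply filterlim_locally. intros eps.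
 assert (Hm := Cmod_pos_ne l Hl).
 apply (@locally_le_locally_norm C_AbsRing C_NormedModule).
 assert (Hd : (0 < Rmin (Cmod l / 2) (eps * Cmod l * Cmod l / 2))%R).
 { apply Rmin_pos. lra. destruct eps as [ep Hep]; simpl. apply Rmult_lt_0_compat; [|lra].
   apply Rmult_lt_0_compat; [|lra]. apply Rmult_lt_0_compat; lra. }
 exists (mkposreal _ Hd). intros z Hz0. assert (Hz : (Cmod (z - l) < Rmin (Cmod l / 2) (eps * Cmod l * Cmod l / 2))%R) by exact Hz0. clear Hz0.
 assert (H1 : (Cmod (z - l) < Cmod l / 2)%R) by (eapply Rlt_le_trans; [exact Hz| apply Rmin_l]).
 assert (H2 : (Cmod (z - l) < eps * Cmod l * Cmod l / 2)%R) by (eapply Rlt_le_trans; [exact Hz| apply Rmin_r]).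
 assert (Hz1 : (Cmod l / 2 < Cmod z)%R).
 { assert (Htr := Cmod_triangle z (l - z)). replace (z + (l - z)) with l in Htr by ring.
   replace (l - z) with (- (z - l)) in Htr by ring. rewrite Cmod_opp in Htr. lra. }
 assert (Hz0 : (z : C) <> 0). { intros Hq. rewrite Hq, Cmod_0 in Hz1. lra. }
 apply (@norm_compat1 C_AbsRing C_NormedModule). change (Cmod (/z - /l) < eps)%R.
 replace (/ z - / l) with ((l - z) * / z * / l) by (field; auto).
 rewrite !Cmod_mult, !Cmod_inv by auto.
 replace (l - z) with (- (z - l)) by ring. rewrite Cmod_opp.
 destruct eps as [ep Hep]; simpl in *.
 apply Rmult_lt_reg_r with (Cmod z * Cmod l)%R. apply Rmult_lt_0_compat; lra.
 replace (Cmod (z - l) * / Cmod z * / Cmod l * (Cmod z * Cmod l))%R with (Cmod (z - l)) by (field; lra).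
 assert (ep * (Cmod l / 2) * Cmod l < ep * (Cmod z * Cmod l))%R.
 { rewrite Rmult_assoc. apply Rmult_lt_compat_l; auto. }
 lra.
Qed.

Lemma L0_inv (f : C -> C) (l : C) : L0 f l -> l <> 0 -> L0 (fun e => / f e) (/ l).
Proof. intros H Hl. eapply filterlim_comp; [exact H | exact (Cinv_cont l Hl)]. Qed.

Definition bin (n p : nat) : C := RtoC (Binomial.C n p).

Lemma bin_0 n : bin n 0 = 1.
Proof. unfold bin, Binomial.C. f_equal. rewrite Nat.sub_0_r. simpl. field. apply INR_fact_neq_0. Qed.
Lemma bin_n n : bin n n = 1.
Proof. unfold bin, Binomial.C. f_equal. rewrite Nat.sub_diag. simpl. field. apply INR_fact_neq_0. Qed.
Lemma bin_pascal n i : (i < n)%nat -> bin n i + bin n (S i) = bin (S n) (S i).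
Proof. intros H. unfold bin. rewrite <- RtoC_plus. f_equal. apply Binomial.pascal; auto. Qed.

Lemma fs_S (f : nat -> C) n : fs f (S n) = fs f n + f n.
Proof. reflexivity. Qed.

Lemma binomial_C (x y : C) k :
  (x + y) ^ k = fs (fun a => bin k a * x ^ a * y ^ (k - a)) (S k).
Proof.
 induction k.
 - simpl. rewrite bin_0. ring.
 - change ((x + y) ^ S k) with ((x + y) * (x + y) ^ k). rewrite IHk.
   rewrite Cmult_plus_distr_r.
   rewrite <- !fs_scal_l.
   rewrite (fs_shift _ (S k)). rewrite bin_0, Nat.sub_0_r.
   rewrite (fs_S (fun i => bin (S k) (S i) * x ^ S i * y ^ (S k - S i)) k).
   rewrite bin_n, Nat.sub_diag.
   rewrite (fs_S (fun i => x * (bin k i * x ^ i * y ^ (k - i))) k).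
   rewrite bin_n, Nat.sub_diag.
   rewrite (fs_shift (fun i => y * (bin k i * x ^ i * y ^ (k - i))) k).
   rewrite bin_0, Nat.sub_0_r.
   rewrite (fs_ext (fun i => bin (S k) (S i) * x ^ S i * y ^ (S k - S i))
              (fun i => x * (bin k i * x ^ i * y ^ (k - i)) + y * (bin k (S i) * x ^ S i * y ^ (k - S i)))).
   2:{ intros i Hi. rewrite <- bin_pascal by auto.
       replace (S k - S i)%nat with (k - i)%nat by lia.
       replace (k - i)%nat with (S (k - S i)) by lia. simpl. ring. }
   rewrite fs_plus. simpl. ring.
Qed.

Open Scope bool_scope.

Definition lsum (g : list nat -> C) (L : list (list nat)) : C := fold_right Cplus 0 (map g L).

Lemma lsum_app (g : list nat -> C) L1 L2 : lsum g (L1 ++ L2) = lsum g L1 + lsum g L2.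
Proof. induction L1; simpl. unfold lsum; simpl; ring. unfold lsum in *; simpl. rewrite IHL1. ring. Qed.
Lemma lsum_ext (g h : list nat -> C) L : (forall x, In x L -> g x = h x) -> lsum g L = lsum h L.
Proof. induction L; intros H; unfold lsum in *; simpl; auto. rewrite H, IHL; auto. intros; apply H; simpl; auto. simpl; auto. Qed.
Lemma lsum_map_cons (g : list nat -> C) a L : lsum g (map (cons a) L) = lsum (fun l => g (a :: l)) L.
Proof. unfold lsum. rewrite map_map. auto. Qed.
Lemma filter_map_cons (P : list nat -> bool) a (L : list (list nat)) :
  filter P (map (cons a) L) = map (cons a) (filter (fun l => P (a :: l)) L).
Proof. induction L; simpl; auto. destruct (P (a :: a0)); simpl; rewrite IHL; auto. Qed.
Lemma lsum_flat (P : list nat -> bool) (g : list nat -> C) L n :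
  lsum g (filter P (flat_map (fun a => map (cons a) L) (seq 0 n))) =
  fs (fun a => lsum (fun l => g (a :: l)) (filter (fun l => P (a :: l)) L)) n.
Proof. induction n. reflexivity. rewrite seq_S, flat_map_app, filter_app, lsum_app, IHn. simpl.
 rewrite app_nil_r, filter_map_cons, lsum_map_cons. reflexivity. Qed.
Lemma lsum_filter_if (P : list nat -> bool) (g : list nat -> C) L :
  lsum g (filter P L) = lsum (fun x => if P x then g x else 0) L.
Proof. induction L; unfold lsum in *; simpl; auto. destruct (P a); simpl; rewrite IHL; ring. Qed.
Lemma lsum_zero (g : list nat -> C) L : (forall x, In x L -> g x = 0) -> lsum g L = 0.
Proof. induction L; intros H; unfold lsum in *; simpl; auto. rewrite H, IHL. ring. intros; apply H; simpl; auto. simpl; auto. Qed.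
Lemma lsum_filter_false (P : list nat -> bool) (g : list nat -> C) L :
  (forall x, In x L -> P x = false) -> lsum g (filter P L) = 0.
Proof. intros H. rewrite lsum_filter_if. apply lsum_zero. intros x Hx. rewrite H; auto. Qed.
Lemma lsum_filter_ext (P Q : list nat -> bool) (g : list nat -> C) L :
  (forall x, In x L -> P x = Q x) -> lsum g (filter P L) = lsum g (filter Q L).
Proof. intros H. rewrite !lsum_filter_if. apply lsum_ext. intros x Hx. rewrite H; auto. Qed.
Lemma lsum_scal_l (c : C) (g : list nat -> C) L : lsum (fun x => c * g x) L = c * lsum g L.
Proof. induction L; unfold lsum in *; simpl. ring. rewrite IHL. ring. Qed.
Lemma lsum_scal_r (c : C) (g : list nat -> C) L : lsum (fun x => g x * c) L = lsum g L * c.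
Proof. induction L; unfold lsum in *; simpl. ring. rewrite IHL. ring. Qed.
Lemma lsum_fs (g : list nat -> nat -> C) L n :
  lsum (fun x => fs (fun j => g x j) n) L = fs (fun j => lsum (fun x => g x j) L) n.
Proof. induction L; unfold lsum in *; simpl. symmetry; apply fs_zero; auto.
 rewrite IHL. rewrite <- fs_plus. auto. Qed.

Lemma lsum_partition (P : list nat -> bool) (w : list nat -> nat) (g : list nat -> C) (e : C) L J :
  (forall x, In x L -> P x = true -> (w x <= J)%nat) ->
  fs (fun j => lsum g (filter (fun x => P x && (w x =? j)%nat) L) * e ^ j) (S J)
  = lsum (fun x => g x * e ^ (w x)) (filter P L).
Proof.
 intros H.
 rewrite (fs_ext _ (fun j => lsum (fun x => if P x && (w x =? j)%nat then g x * e ^ j else 0) L)).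
 2:{ intros j _. rewrite <- lsum_scal_r, lsum_filter_if. apply lsum_ext. intros x _.
     destruct (P x && (w x =? j)%nat); ring. }
 rewrite <- lsum_fs, lsum_filter_if. apply lsum_ext. intros x Hx.
 destruct (P x) eqn:HP.
 - rewrite (fs_ext _ (fun j => if (j =? w x)%nat then g x * e ^ (w x) else 0)).
   apply fs_delta. specialize (H x Hx HP). lia.
   intros j _. simpl. destruct (Nat.eqb_spec (w x) j); destruct (Nat.eqb_spec j (w x)); subst; auto; lia.
 - apply fs_zero. auto.
Qed.

Lemma idx_len n b al : In al (idx_lists n b) -> length al = n.
Proof. revert al. induction n; cbn [idx_lists]; intros al H. destruct H as [<-|[]]; auto.
 apply in_flat_map in H. destruct H as [a [_ Ha]]. apply in_map_iff in Ha. destruct Ha as [l [<- Hl]].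
 simpl. rewrite (IHn l); auto. Qed.

Lemma abs_le_wgt s al : (1 <= s)%nat -> (abs_idx al <= wgt_from s al)%nat.
Proof. revert s. induction al; simpl; intros s Hs. lia. specialize (IHal (S s)). nia. Qed.
Lemma wgt_le s al : (wgt_from s al <= (s + length al) * abs_idx al)%nat.
Proof. revert s. induction al; simpl; intros s. lia. specialize (IHal (S s)). nia. Qed.

Section T.
Variable t : nat -> C.

Definition wt (s : nat) (al : list nat) : C := RtoC (/ INR (fact_prod al)) * mon_from t s al.

Definition G n s b k j : C :=
  lsum (wt s) (filter (fun al => (abs_idx al =? k)%nat && (wgt_from s al =? j)%nat) (idx_lists n b)).

Ltac bsolve := repeat match goal with
  | |- context [Nat.eqb ?x ?y] => destruct (Nat.eqb_spec x y)
  | |- context [Nat.leb ?x ?y] => destruct (Nat.leb_spec x y) end; simpl;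
  first [reflexivity | exfalso; lia].

Lemma wt_cons s a l : wt s (a :: l) = (RtoC (/ INR (fact a)) * t s ^ a) * wt (S s) l.
Proof. unfold wt. simpl. rewrite mult_INR, Rinv_mult, RtoC_mult. ring. Qed.

Lemma G_rec n s b k j : G (S n) s b k j =
  fs (fun a => if (a <=? k)%nat && (s * a <=? j)%nat
               then (RtoC (/ INR (fact a)) * t s ^ a) * G n (S s) b (k - a) (j - s * a) else 0) (S b).
Proof.
 unfold G at 1. cbn [idx_lists]. rewrite lsum_flat. apply fs_ext. intros a Ha.
 destruct ((a <=? k)%nat && (s * a <=? j)%nat) eqn:Hc.
 - unfold G. rewrite <- lsum_scal_l.
   rewrite (lsum_filter_ext _ (fun al => (abs_idx al =? k - a)%nat && (wgt_from (S s) al =? j - s * a)%nat)).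
   apply lsum_ext. intros; apply wt_cons.
   intros x _. simpl. apply andb_prop in Hc. destruct Hc as [H1 H2].
   apply Nat.leb_le in H1. apply Nat.leb_le in H2. bsolve.
 - apply lsum_filter_false. intros x _. simpl.
   destruct (Nat.leb_spec a k); destruct (Nat.leb_spec (s * a) j); simpl in Hc; try discriminate; bsolve.
Qed.

Lemma G0 s b k j : G 0 s b k j = if (k =? 0)%nat && (j =? 0)%nat then 1 else 0.
Proof. unfold G. simpl. destruct k; destruct j; simpl; unfold lsum, wt; simpl; try reflexivity.
 rewrite Rinv_1. ring. Qed.

Lemma G_trunc n : forall s b k j, (1 <= s)%nat -> (j < s + n)%nat -> G (S n) s b k j = G n s b k j.
Proof.
 induction n; intros s b k j Hs Hj.
 - rewrite G_rec, G0, fs_shift.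
   rewrite (fs_zero (fun i => if (S i <=? k)%nat && (s * S i <=? j)%nat then _ else 0)).
   + rewrite !G0. replace (s * 0)%nat with 0%nat by lia. rewrite !Nat.sub_0_r. simpl.
     destruct (k =? 0)%nat; destruct (j =? 0)%nat; simpl; rewrite ?Rinv_1; ring.
   + intros i Hi. destruct ((S i <=? k)%nat && (s * S i <=? j)%nat) eqn:Hc; auto.
     rewrite G0. destruct ((k - S i =? 0)%nat && (j - s * S i =? 0)%nat) eqn:H2; [|ring].
     exfalso. apply andb_prop in Hc, H2. destruct Hc as [Hc1 Hc2]; destruct H2 as [H3 H4].
     apply Nat.leb_le in Hc1, Hc2. apply Nat.eqb_eq in H3, H4. nia.
 - rewrite G_rec. rewrite (G_rec n). apply fs_ext. intros a Ha.
   destruct ((a <=? k)%nat && (s * a <=? j)%nat); auto. rewrite IHn; auto; lia.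
Qed.

Lemma G_small n s b k j : (1 <= s)%nat -> (j < k)%nat -> G n s b k j = 0.
Proof. intros Hs Hj. unfold G. apply lsum_filter_false. intros x _.
 pose proof (abs_le_wgt s x Hs). bsolve. Qed.

Variable e : C.

Definition E n s b k : C :=
  lsum (fun al => wt s al * e ^ (wgt_from s al)) (filter (fun al => (abs_idx al =? k)%nat) (idx_lists n b)).

Lemma E_rec n s b k : E (S n) s b k =
  fs (fun a => if (a <=? k)%nat
               then (RtoC (/ INR (fact a)) * (t s * e ^ s) ^ a) * E n (S s) b (k - a) else 0) (S b).
Proof.
 unfold E at 1. cbn [idx_lists]. rewrite lsum_flat. apply fs_ext. intros a Ha.
 destruct (a <=? k)%nat eqn:Hc.
 - unfold E. rewrite <- lsum_scal_l.
   rewrite (lsum_filter_ext _ (fun al => (abs_idx al =? k - a)%nat)).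
   apply lsum_ext. intros; rewrite wt_cons. simpl. rewrite Cpow_add_r, Cpow_mult_r, Cpow_mult_l. ring.
   intros x _. simpl. apply Nat.leb_le in Hc. bsolve.
 - apply lsum_filter_false. intros x _. simpl. apply Nat.leb_gt in Hc. bsolve.
Qed.

Lemma E0 s b k : E 0 s b k = if (k =? 0)%nat then 1 else 0.
Proof. unfold E. simpl. destruct k; simpl; unfold lsum, wt; simpl; try reflexivity.
 rewrite Rinv_1. ring. Qed.

Lemma RtoC_fact_inv m : RtoC (/ INR (fact m)) * RtoC (INR (fact m)) = 1.
Proof. rewrite <- RtoC_mult. rewrite Rinv_l. auto. apply INR_fact_neq_0. Qed.

Lemma multinom n : forall s b k, (k <= b)%nat ->
  RtoC (INR (fact k)) * E n s b k = (fs (fun i => t (s + i)%nat * e ^ (s + i)%nat) n) ^ k.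
Proof.
 induction n; intros s b k Hk.
 - rewrite E0. simpl. destruct k; simpl. ring. ring.
 - rewrite E_rec. rewrite (fs_shift (fun i => t (s + i)%nat * e ^ (s + i)%nat) n). rewrite Nat.add_0_r.
   rewrite (fs_ext (fun i => t (s + S i)%nat * e ^ (s + S i)%nat) (fun i => t (S s + i)%nat * e ^ (S s + i)%nat))
     by (intros; rewrite Nat.add_succ_r; auto).
   rewrite binomial_C.
   replace (S b) with (S k + (b - k))%nat by lia. rewrite fs_add.
   rewrite (fs_zero (fun i => if (S k + i <=? k)%nat then _ else 0)).
   2:{ intros i _. destruct (Nat.leb_spec (S k + i) k). lia. auto. }
   rewrite Cplus_0_r, <- fs_scal_l. apply fs_ext. intros a Ha.
   destruct (Nat.leb_spec a k); [|lia].
   specialize (IHn (S s) b (k - a)%nat ltac:(lia)).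
   assert (HE : E n (S s) b (k - a) = RtoC (/ INR (fact (k - a))) *
              fs (fun i => t (S s + i)%nat * e ^ (S s + i)%nat) n ^ (k - a)).
   { rewrite <- IHn. rewrite Cmult_assoc, RtoC_fact_inv. ring. }
   rewrite HE. unfold bin, Binomial.C. unfold Rdiv. rewrite Rinv_mult, !RtoC_mult. ring.
Qed.

End T.

Lemma Mpoly_G r t k j : Mpoly r t k j = if (k <=? j)%nat then RtoC (INR (fact k)) * G t r 1 k k j else 0.
Proof. unfold Mpoly, G. destruct (k <=? j)%nat; auto.
 change (fold_right Cplus 0 (map ?F ?L)) with (lsum F L).
 rewrite <- lsum_scal_l. apply lsum_ext. intros x _. unfold wt. unfold Rdiv. rewrite RtoC_mult. ring. Qed.

Lemma Mpoly_trunc r0 t k p : (p < S r0)%nat -> Mpoly r0 t k p = Mpoly (S r0) t k p.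
Proof. intros H. rewrite !Mpoly_G. destruct (k <=? p)%nat; auto. rewrite G_trunc; auto; lia. Qed.

Lemma Mpoly_low r t k p : (p < k)%nat -> Mpoly r t k p = 0.
Proof. intros H. unfold Mpoly. destruct (Nat.leb_spec k p); auto; lia. Qed.

Lemma Mpoly_expand r t e k J : ((1 + r) * k <= J)%nat ->
  fs (fun p => Mpoly r t k p * e ^ p) (S J) = (fs (fun i => t (1 + i)%nat * e ^ (1 + i)%nat) r) ^ k.
Proof.
 intros HJ. rewrite <- (multinom t e r 1 k k) by lia.
 rewrite (fs_ext _ (fun p => RtoC (INR (fact k)) * (G t r 1 k k p * e ^ p))).
 2:{ intros p _; rewrite Mpoly_G; destruct (Nat.leb_spec k p). ring. rewrite G_small by lia; ring. }
 rewrite fs_scal_l. f_equal. unfold G, E.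
 apply (lsum_partition (fun al => (abs_idx al =? k)%nat) (wgt_from 1) (wt t 1) e).
 intros x Hx HP. apply Nat.eqb_eq in HP. pose proof (wgt_le 1 x) as Hw. rewrite (idx_len r k x Hx) in Hw. subst; nia.
Qed.

Lemma Cpow_ne0 (e : C) n : e <> 0 -> e ^ n <> 0.
Proof. intros H. induction n; simpl. apply C1_nz. apply Cmult_neq_0; auto. Qed.

Lemma Cpowz_nat (e : C) q r : e <> 0 -> Cpowz e (Z.of_nat q - Z.of_nat r) = e ^ q / e ^ r.
Proof.
 intros He. destruct (le_lt_dec r q).
 - rewrite <- Nat2Z.inj_sub by auto. replace q with ((q - r) + r)%nat at 2 by lia.
   rewrite Cpow_add_r. generalize (q - r)%nat. intros n.
   assert (Cpowz e (Z.of_nat n) = e ^ n).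
   { destruct n. reflexivity. simpl. rewrite SuccNat2Pos.id_succ. reflexivity. }
   rewrite H. field. apply Cpow_ne0; auto.
 - assert (Hz : (Z.of_nat q - Z.of_nat r)%Z = Z.neg (Pos.of_succ_nat (r - q - 1))).
   { rewrite <- Pos2Z.opp_pos, Zpos_P_of_succ_nat. lia. }
   rewrite Hz. simpl. rewrite SuccNat2Pos.id_succ. replace (S (r - q - 1)) with (r - q)%nat by lia.
   replace r with (q + (r - q))%nat at 2 by lia. rewrite Cpow_add_r. field.
   split; apply Cpow_ne0; auto.
Qed.

Lemma geom (x D : C) N : D <> 0 -> D - x <> 0 ->
  / (D - x) = fs (fun n => x ^ n / D ^ (S n)) N + x ^ N / (D ^ N * (D - x)).
Proof. intros HD Hx. induction N. simpl. field. auto.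
 rewrite IHN. simpl. field. split; auto. split; auto. apply Cpow_ne0; auto. Qed.

Lemma fs_from (g : nat -> C) k n : (k <= n)%nat -> (forall p, (p < k)%nat -> g p = 0) ->
  fs (fun i => g (k + i)%nat) (n - k) = fs g n.
Proof. intros H1 H2. replace n with (k + (n - k))%nat at 2 by lia. rewrite fs_add, (fs_zero g k) by auto. ring. Qed.

Lemma L0_div (f g : C -> C) lf lg : L0 f lf -> L0 g lg -> lg <> 0 -> L0 (fun e => f e / g e) (lf / lg).
Proof. intros. apply L0_mult; auto. apply L0_inv; auto. Qed.

Lemma L0_ext_cond (Q : C -> Prop) (f g : C -> C) l : locally' (0:C) Q ->
  (forall e : C, e <> 0 -> Q e -> f e = g e) -> L0 f l -> L0 g l.
Proof. intros HQ H. apply L0_ext. assert (H0 : locally' (0:C) (fun e : C => e <> 0)).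
 { unfold locally', within. apply filter_forall. auto. }
 generalize (filter_and _ _ HQ H0). apply filter_imp. intros x [Hx1 Hx2]. auto. Qed.

Lemma L0_poly0 (c : nat -> C) N : L0 (fun e => fs (fun p => c p * e ^ (S p)) N) 0.
Proof. assert (Hz : fs (fun p => c p * 0 ^ (S p)) N = 0) by (apply fs_zero; intros; simpl; ring).
 rewrite <- Hz. apply L0_fs. intros. apply L0_mult. apply L0_const. apply L0_pow, L0_id. Qed.

Lemma fs_sub_scal (X Y : nat -> C) (c : C) n : fs (fun p => X p - c * Y p) n = fs X n - c * fs Y n.
Proof. induction n; simpl. ring. rewrite IHn. ring. Qed.
Lemma L0_eq (f : C -> C) l l' : L0 f l -> l = l' -> L0 f l'.
Proof. intros H <-. auto. Qed.

Section Main.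
Variable r0 : nat.
Notation r := (S r0).
Variable t : nat -> C.
Variable D : C.
Hypothesis HD : D <> 0.
Variable w : nat -> C.
Variable At : nat -> C.
Variables (Af : nat -> C -> C) (Cf Hf : C -> C) (h0 : C).

Notation M := (Mpoly r t).
Definition Pe (e : C) := fs (fun q => w q * e ^ q) (S r).
Definition Sf (e : C) := Pe e / e ^ r.
Definition rho (k : nat) (e : C) := fs (fun i => w (r - k + 1 + i)%nat * e ^ (S i)) k.
Definition del (e : C) := fs (fun i => t (1 + i)%nat * e ^ (1 + i)%nat) r.
Definition dl (e : C) := fs (fun i => t (1 + i)%nat * e ^ i) r.
Definition rp (p : nat) (e : C) := Af p e - (At p - e ^ p * Sf e + rho p e).
Definition Y1 (e : C) := fs (fun k => fs (fun p => (At p + rho p e + rp p e) * M k p) r / D ^ (S k)) r.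
Definition Qk (k : nat) (e : C) := fs (fun p => M k p * e ^ p) r.
Definition Rn (n : nat) (e : C) := fs (fun i => M n (r + S i)%nat * e ^ i) (r * n + n).
Definition Zf (e : C) := Pe e * fs (fun n => (M n r + e * Rn n e) / D ^ (S n)) (S r)
   + Pe e * dl e ^ r * del e / (D ^ (S r) * (D - del e)).

Lemma I1 (e : C) : fs (fun k => fs (fun p => Af p e * Mpoly r0 t k p) r / D ^ (S k)) r
   = Y1 e - Sf e * fs (fun k => Qk k e / D ^ (S k)) r.
Proof.
 unfold Y1. rewrite <- fs_sub_scal. apply fs_ext. intros k Hk.
 rewrite (fs_ext (fun p => Af p e * Mpoly r0 t k p)
   (fun p => (At p + rho p e + rp p e) * M k p - Sf e * (M k p * e ^ p))).
 2:{ intros p Hp. rewrite Mpoly_trunc by auto. unfold rp. ring. }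
 rewrite fs_sub_scal. unfold Qk. field. apply Cpow_ne0; auto.
Qed.

Lemma del_dl (e : C) : del e = e * dl e.
Proof. unfold del, dl. rewrite <- fs_scal_l. apply fs_ext. intros. simpl. ring. Qed.

Lemma del_pow n (e : C) : del e ^ n = Qk n e + e ^ r * (M n r + e * Rn n e).
Proof.
 unfold del. rewrite <- (Mpoly_expand r t e n (r + (r * n + n))) by lia.
 rewrite <- Nat.add_succ_r, fs_add. rewrite (fs_shift (fun i => Mpoly r t n (r + i)%nat * e ^ (r + i)%nat)). rewrite Nat.add_0_r. unfold Qk, Rn.
 f_equal. rewrite <- (fs_scal_l e), Cmult_plus_distr_l, <- fs_scal_l. f_equal. ring.
 apply fs_ext. intros i _. rewrite Cpow_add_r. simpl. ring.
Qed.

Lemma Qk_r (e : C) : Qk r e = 0.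
Proof. unfold Qk. apply fs_zero. intros p Hp. rewrite Mpoly_low by auto. ring. Qed.

Lemma I2 (e : C) : e <> 0 -> D - del e <> 0 ->
  Sf e / (D - del e) = Sf e * fs (fun k => Qk k e / D ^ (S k)) r + Zf e.
Proof.
 intros He Hd. unfold Cdiv at 1. rewrite (geom (del e) D (S r)) by auto.
 assert (HS : Sf e * e ^ r = Pe e) by (unfold Sf; field; apply Cpow_ne0; auto).
 rewrite Cmult_plus_distr_l.
 rewrite (fs_ext (fun n => del e ^ n / D ^ (S n))
    (fun n => Qk n e / D ^ (S n) + e ^ r * ((M n r + e * Rn n e) / D ^ (S n)))).
 2:{ intros n _. rewrite del_pow. field. apply Cpow_ne0; auto. }
 rewrite fs_plus. rewrite (fs_S (fun n => Qk n e / D ^ S n) r). rewrite Qk_r.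
 rewrite fs_scal_l.
 assert (Hdp : del e ^ r = e ^ r * dl e ^ r) by (rewrite del_dl, Cpow_mult_l; auto).
 assert (Hx : del e ^ S r = e ^ r * (dl e ^ r * del e)) by (change (del e ^ S r) with (del e * del e ^ r); rewrite Hdp; ring).
 rewrite Hx. unfold Zf. rewrite <- HS. field. repeat split; auto; apply Cpow_ne0; auto.
Qed.


Lemma Pe0 : Pe 0 = w 0.
Proof. unfold Pe. rewrite fs_shift. rewrite fs_zero. simpl. ring. intros; simpl; ring. Qed.

Lemma final_alg (hAr : At r = w 0) :
  fs (fun k => fs (fun p => At p * M k p) r / D ^ (S k)) r + w 0 * fs (fun n => M n r / D ^ (S n)) (S r)
  = fs (fun i => fs (fun p => At p * M i p) (S r) / D ^ (S i)) (S r).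
Proof.
 rewrite (fs_S (fun i => fs (fun p => At p * M i p) (S r) / D ^ (S i)) r).
 rewrite (fs_S (fun n => M n r / D ^ (S n)) r).
 rewrite (fs_ext (fun i => fs (fun p => At p * M i p) (S r) / D ^ S i)
   (fun i => fs (fun p => At p * M i p) r / D ^ (S i) + w 0 * (M i r / D ^ (S i)))).
 2:{ intros i _. rewrite (fs_S (fun p => At p * M i p) r). rewrite hAr. field. apply Cpow_ne0; auto. }
 rewrite fs_plus, fs_scal_l.
 rewrite (fs_S (fun p => At p * M r p) r).
 rewrite (fs_zero (fun p => At p * M r p) r). 2:{ intros p Hp. rewrite Mpoly_low by auto. ring. }
 rewrite hAr. field. apply Cpow_ne0; auto.
Qed.

Lemma main_scalar
 (hC : L0 (fun e => Cf e - Sf e) 0)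
 (hA : forall k, (k < r)%nat -> L0 (rp k) 0)
 (hH : L0 Hf h0) (hAr : At r = w 0) :
 L0 (fun e => fs (fun k => fs (fun p => Af p e * Mpoly r0 t k p) r / D ^ (S k)) r + Cf e / (D - del e) + Hf e)
    (fs (fun i => fs (fun p => At p * M i p) (S r) / D ^ (S i)) (S r) + h0).
Proof.
 assert (Hdel : L0 del 0) by exact (L0_poly0 (fun i => t (1 + i)%nat) r).
 assert (HDd : L0 (fun e => D - del e) (D - 0)) by (apply L0_minus; [apply L0_const | exact Hdel]).
 assert (HDd0 : D - 0 <> 0) by (replace (D - 0) with D by ring; auto).
 pose proof (L0_ne0 _ _ HDd HDd0) as Hev.
 apply (L0_ext_cond _ (fun e => Y1 e + (Cf e - Sf e) / (D - del e) + Zf e + Hf e) _ _ Hev).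
 { intros e He Hd. rewrite I1.
   replace (Cf e / (D - del e)) with ((Cf e - Sf e) / (D - del e) + Sf e / (D - del e)) by (field; auto).
   rewrite I2 by auto. ring. }
 eapply L0_eq. apply L0_plus; [apply L0_plus; [apply L0_plus|] |].
 - unfold Y1. apply L0_fs; intros k Hk. apply L0_div; [| apply L0_const | apply Cpow_ne0; auto].
   apply L0_fs. intros p Hp. apply L0_mult; [|apply L0_const]. apply L0_plus; [apply L0_plus|].
   apply L0_const. unfold rho. apply L0_poly0. apply hA; auto.
 - apply L0_div; [exact hC | exact HDd | exact HDd0].
 - unfold Zf. apply L0_plus.
   + apply L0_mult. apply L0_poly. apply L0_fs. intros n Hn. apply L0_div; [| apply L0_const | apply Cpow_ne0; auto].
     apply L0_plus. apply L0_const. apply L0_mult. apply L0_id. unfold Rn. apply L0_poly.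
   + apply L0_div. apply L0_mult. apply L0_mult. apply L0_poly. apply L0_pow. apply L0_poly. exact Hdel.
     apply L0_mult. apply L0_const. exact HDd.
     apply Cmult_neq_0. apply Cpow_ne0; auto. auto.
 - exact hH.
 - fold (Pe 0). rewrite Pe0. rewrite <- final_alg by auto.
   rewrite (fs_ext (fun i => fs (fun p => (At p + 0 + 0) * M i p) r / D ^ S i)
                   (fun k => fs (fun p => At p * M k p) r / D ^ (S k))).
   2:{ intros. f_equal. apply fs_ext. intros. ring. }
   rewrite (fs_ext (fun i => (M i r + 0 * fs (fun p => M i (r + S p)%nat * 0 ^ p) (r * i + i)) / D ^ S i)
                   (fun n => M n r / D ^ (S n))).
   2:{ intros. field. apply Cpow_ne0; auto. }
   field. split; auto. apply Cpow_ne0; auto.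
Qed.

End Main.

Lemma T_decomp (W : Z -> Mat) (Ac : nat -> nat -> Mat) (a b r k : nat) (e : C) :
  (k < r)%nat -> e <> 0 ->
  fs (fun q => Acoefs W Ac k a b (Z.of_nat q - Z.of_nat (r - k)) * Cpowz e (Z.of_nat q - Z.of_nat (r - k))) (S (r - k))
  = Atil r W Ac k a b
    - e ^ k * (fs (fun q => W (Z.of_nat q - Z.of_nat r)%Z a b * e ^ q) (S r) / e ^ r)
    + fs (fun i => W (Z.of_nat (r - k + 1 + i) - Z.of_nat r)%Z a b * e ^ (S i)) k.
Proof.
 intros Hk He.
 set (w := fun q : nat => W (Z.of_nat q - Z.of_nat r)%Z a b).
 change (fun q => W (Z.of_nat q - Z.of_nat r)%Z a b * e ^ q) with (fun q => w q * e ^ q).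
 change (fun i => W (Z.of_nat (r - k + 1 + i) - Z.of_nat r)%Z a b * e ^ (S i)) with (fun i => w (r - k + 1 + i)%nat * e ^ (S i)).
 set (d := (r - k)%nat).
 assert (Hr : r = (d + k)%nat) by (unfold d; lia).
 assert (Hedn : e ^ d <> 0) by (apply Cpow_ne0; auto).
 assert (Hekn : e ^ k <> 0) by (apply Cpow_ne0; auto).
 rewrite fs_S.
 rewrite (fs_ext _ (fun q => (- (w q * e ^ q)) * / e ^ d)).
 2:{ intros q Hq. unfold Acoefs. rewrite Cpowz_nat by auto.
     destruct (Z.ltb_spec (Z.of_nat q - Z.of_nat d) 0); [|lia].
     unfold w. replace (Z.of_nat q - Z.of_nat d - Z.of_nat k)%Z with (Z.of_nat q - Z.of_nat r)%Z.
     unfold Cdiv. ring. unfold d. rewrite Nat2Z.inj_sub by lia. lia. }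
 rewrite fs_scal_r, fs_opp.
 unfold Acoefs. replace (Z.of_nat d - Z.of_nat d)%Z with 0%Z by lia. simpl (0 <? 0)%Z.
 change (Z.to_nat 0) with 0%nat. simpl (Cpowz e 0).
 unfold Atil. destruct (Nat.ltb_spec k r); [|lia].
 replace (W (- Z.of_nat k)%Z a b) with (w d).
 2:{ unfold w, d. f_equal. rewrite Nat2Z.inj_sub by lia. lia. }
 replace (S r) with (S d + k)%nat by lia. rewrite fs_add, fs_S.
 rewrite (fs_ext (fun i => w (r - k + 1 + i)%nat * e ^ S i)
                 (fun i => (w (S d + i)%nat * e ^ (S d + i)%nat) * / e ^ d)).
 2:{ intros i _. replace (r - k + 1 + i)%nat with (d + S i)%nat by (unfold d; lia).
     replace (S d + i)%nat with (d + S i)%nat by lia. rewrite (Cpow_add_r e d (S i)). field. auto. }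
 rewrite fs_scal_r. rewrite Hr. rewrite Cpow_add_r. rewrite Z.ltb_irrefl. field. split; auto.
Qed.

Theorem theorem0p6 :
  forall (m r : nat) (u : C) (t : nat -> C)
         (A : nat -> C -> Mat) (Cm : C -> Mat) (H : C -> C -> Mat) (H0 : C -> Mat)
         (W : Z -> Mat) (Ac : nat -> nat -> Mat),
  (1 <= m)%nat -> (1 <= r)%nat ->
  (forall a b, (a < m)%nat -> (b < m)%nat ->
     asymp (fun e => Cm e a b) r (fun n => W n a b)) ->
  (forall k a b, (k < r)%nat -> (a < m)%nat -> (b < m)%nat ->
     asymp (fun e => A k e a b) (r - k) (Acoefs W Ac k a b)) ->
  (forall a b, (a < m)%nat -> (b < m)%nat ->
     locally' (0 : C) (fun e => holo_at (fun lam => H e lam a b) u /\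
                                holo_at (fun lam => H e lam a b) (vpt r u t e))) ->
  (forall lam a b, (a < m)%nat -> (b < m)%nat ->
     filterlim (fun e => H e lam a b) (locally' (0 : C)) (locally (H0 lam a b))) ->
  forall lam : C, lam <> u ->
  forall a b, (a < m)%nat -> (b < m)%nat ->
    filterlim (fun e => conn r u t A Cm H e lam a b) (locally' (0 : C))
      (locally (csum (fun i => Btil r t W Ac i a b / Cpow (lam - u) (S i)) 0 r
                + H0 lam a b)).
Proof.
 intros m r u t A Cm H H0 W Ac Hm Hr HC HA _ HH0 lam Hlam a b Ha Hb.
 destruct r as [|r0]; [lia|].
 assert (HD : lam - u <> 0).
 { intros Hc. apply Hlam. replace lam with ((lam - u) + u) by ring. rewrite Hc. ring. }
 set (w := fun q : nat => W (Z.of_nat q - Z.of_nat (S r0))%Z a b).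
 set (At := fun p => Atil (S r0) W Ac p a b).
 pose proof (main_scalar r0 t (lam - u) HD w At (fun k e => A k e a b) (fun e => Cm e a b)
               (fun e => H e lam a b) (H0 lam a b)) as MS.
 assert (Tgt : csum (fun i => Btil (S r0) t W Ac i a b / Cpow (lam - u) (S i)) 0 (S r0)
          = fs (fun i => fs (fun p => At p * Mpoly (S r0) t i p) (S (S r0)) / (lam - u) ^ (S i)) (S (S r0))).
 { rewrite csum_fs. simpl (S (S r0) - 0)%nat. apply fs_ext. intros i Hi. simpl (0 + i)%nat.
   unfold Btil. rewrite csum_fs. f_equal. apply (fs_from (fun p => At p * Mpoly (S r0) t i p)). lia.
   intros p Hp. rewrite Mpoly_low by auto. ring. }
 rewrite Tgt.
 eapply filterlim_ext_loc; [| apply MS].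
 - apply filter_forall. intros e. unfold conn, Bk.
   replace (S r0 - 1)%nat with r0 by lia.
   rewrite (csum_fs _ 0). replace (S r0 - 0)%nat with (S r0) by lia.
   f_equal. f_equal.
   + apply fs_ext. intros k Hk. simpl (0 + k)%nat.
     rewrite csum_fs. replace (S r0 - k)%nat with (S r0 - k)%nat by lia. f_equal.
     symmetry. apply (fs_from (fun p => A p e a b * Mpoly r0 t k p)). lia.
     intros p Hp. rewrite Mpoly_low by auto. ring.
   + f_equal. unfold vpt, del. rewrite csum_fs. replace (S (S r0) - 1)%nat with (S r0) by lia. ring.
 -
   specialize (HC a b Ha Hb 0%nat). unfold asymp in HC.
   eapply L0_ext0; [| exact HC]. intros e He. cbv beta.
   rewrite csum_fs. replace (S (S r0 + 0) - 0)%nat with (S (S r0)) by lia. cbv beta.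
   assert (Hs : fs (fun i => W (Z.of_nat (0 + i) - Z.of_nat (S r0))%Z a b * Cpowz e (Z.of_nat (0 + i) - Z.of_nat (S r0))) (S (S r0))
             = fs (fun q => w q * e ^ q) (S (S r0)) / e ^ (S r0)).
   { unfold Cdiv. rewrite <- fs_scal_r. apply fs_ext. intros q _. simpl (0 + q)%nat. rewrite Cpowz_nat by auto. unfold w, Cdiv. ring. }
   rewrite Hs. unfold Sf, Pe. field. apply Cpow_ne0; auto.
 - intros k Hk. specialize (HA k a b Hk Ha Hb 0%nat). unfold asymp in HA.
   eapply L0_ext0; [| exact HA]. intros e He. cbv beta. unfold rp, Sf, Pe, rho.
   rewrite csum_fs. replace (S (S r0 - k + 0) - 0)%nat with (S (S r0 - k)) by lia. cbv beta.
   rewrite (fs_ext (fun i => Acoefs W Ac k a b (Z.of_nat (0 + i) - Z.of_nat (S r0 - k)) *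
      Cpowz e (Z.of_nat (0 + i) - Z.of_nat (S r0 - k)))
     (fun q => Acoefs W Ac k a b (Z.of_nat q - Z.of_nat (S r0 - k)) * Cpowz e (Z.of_nat q - Z.of_nat (S r0 - k))))
     by auto.
   rewrite T_decomp by auto. unfold At, w. field; apply Cpow_ne0; auto.
 - exact (HH0 lam a b Ha Hb).
 - unfold At, w, Atil. rewrite Nat.ltb_irrefl. f_equal.
Qed.
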